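(* Let $T$ be a tree on $n$ vertices with distance matrix $D$ and degree vector $d$. Then $d^\top D d = 4\mathbf{1}^\top D\mathbf{1} - 2(n-1)(2n-1)$.
   Context: $\mathbf{1}$ denotes the all-ones vector of length $n$; the distance matrix $D$ has $(a,b)$ entry equal to the graph distance between vertices $a$ and $b$ of $T$; $d$ is the vector whose $a$-th entry is the degree of vertex $a$. *)

(* Defs.v *)
From mathcomp Require Import all_boot all_order all_algebra.
Set Implicit Arguments. Unset Strict Implicit. Unset Printing Implicit Defensive.
Import GRing.Theory.

Definition simple_graph (T : finType) (e : rel T) : Prop :=
  symmetric e /\ irreflexive e.

Definition connected_graph (T : finType) (e : rel T) : Prop :=
  forall x y : T, connect e x y.

Definition has_cycle (T : finType) (e : rel T) : Prop :=
  exists s : seq T, [/\ 3 <= size s, uniq s & cycle e s].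

Definition is_tree (T : finType) (e : rel T) : Prop :=
  [/\ simple_graph e, connected_graph e & ~ has_cycle e].

Definition walk_len (T : finType) (e : rel T) (k : nat) (x y : T) : bool :=
  [exists s : k.-tuple T, path e x s && (last x s == y)].

(* graph distance: least k such that a walk of length k from x to y exists
   (searched among 0 .. #|T|-1, which suffices for a connected graph) *)
Definition gdist (T : finType) (e : rel T) (x y : T) : nat :=
  find (fun k => walk_len e k x y) (iota 0 #|T|).

Definition deg (T : finType) (e : rel T) (x : T) : nat := #|[set y | e x y]|.

Definition dist_mx (n : nat) (e : rel 'I_n) : 'M[int]_n :=
  \matrix_(a, b) Posz (gdist e a b).

Definition deg_vec (n : nat) (e : rel 'I_n) : 'cV[int]_n :=
  \col_a Posz (deg e a).

Definition ones (n : nat) : 'cV[int]_n := const_mx 1%R.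

(* Main.v *)
Require Import Defs.
From mathcomp Require Import all_boot all_order all_algebra.
From mathcomp Require Import ring.
Import GRing.Theory.

Section Walks.
Variables (T : finType) (e : rel T).
Hypothesis esy : symmetric e.
Lemma esy' x y : e x y -> e y x. Proof. by rewrite esy. Qed.
Arguments esy' {x y}.
Hypothesis eirr : irreflexive e.
Hypothesis econ : connected_graph e.
Hypothesis eacyc : ~ has_cycle e.

Lemma walkP k x y :
  reflect (exists s, [/\ size s = k, path e x s & last x s = y]) (walk_len e k x y).
Proof.
apply: (iffP existsP) => [[s /andP[p /eqP l]] | [s [sz p l]]].
  by exists (val s); split => //; exact: size_tuple.
by subst k; exists (in_tuple s); rewrite p l eqxx.
Qed.

Lemma walk_ex x y : exists2 k, k < #|T| & walk_len e k x y.
Proof.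
have /connectP[p pp ->] := econ x y.
case: (shortenP pp) => p' pp' up' _.
exists (size p'); last by apply/walkP; exists p'.
by move/card_uniqP: up' => /= h; rewrite -ltnS -h ltnS; exact: max_card.
Qed.

Lemma gdist_walk x y : walk_len e (gdist e x y) x y.
Proof.
have [k kT wk] := walk_ex x y.
have hh : has (fun k => walk_len e k x y) (iota 0 #|T|).
  by apply/hasP; exists k => //; rewrite mem_iota.
have fl : find (fun k => walk_len e k x y) (iota 0 #|T|) < #|T|.
  by rewrite -[X in _ < X](size_iota 0 #|T|) -has_find.
by have := nth_find 0 hh; rewrite nth_iota // add0n.
Qed.

Lemma gdist_min k x y : walk_len e k x y -> gdist e x y <= k.
Proof.
move=> wk; rewrite leqNgt; apply/negP => lt.
have kT : k < #|T|.
  apply: (leq_trans lt); have := find_size (fun k => walk_len e k x y) (iota 0 #|T|).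
  rewrite size_iota => h; have [k' kT wk'] := walk_ex x y.
  have hh : has (fun k => walk_len e k x y) (iota 0 #|T|).
    by apply/hasP; exists k' => //; rewrite mem_iota.
  by move: hh; rewrite has_find size_iota.
have := before_find 0 lt; rewrite nth_iota // add0n wk; done.
Qed.

Lemma gdistP x y : exists s, [/\ size s = gdist e x y, path e x s & last x s = y].
Proof. exact/walkP/gdist_walk. Qed.

Lemma gdist_le x y s : path e x s -> last x s = y -> gdist e x y <= size s.
Proof. by move=> p l; apply: gdist_min; apply/walkP; exists s. Qed.
Arguments gdist_le {x y s}.

Lemma gdist_xx x : gdist e x x = 0.
Proof. by apply/eqP; rewrite -leqn0; exact: (@gdist_le x x [::]). Qed.

Lemma gdist0 x y : gdist e x y = 0 -> x = y.
Proof. move=> h; have [s [sz _ l]] := gdistP x y; move: sz l; rewrite h. by case: s => //= _ <-. Qed.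

Lemma rev_walk x s : path e x s ->
  path e (last x s) (rev (belast x s)) /\ last (last x s) (rev (belast x s)) = x.
Proof.
move=> p; split.
  by rewrite rev_path; apply: sub_path p => a b; rewrite esy.
have h : rev (x :: s) = last x s :: rev (belast x s) by rewrite lastI rev_rcons.
by have := congr1 (last x) h; rewrite /= rev_cons last_rcons => <-.
Qed.
Arguments rev_walk {x s}.

Lemma gdist_sym x y : gdist e x y = gdist e y x.
Proof.
have H a b : gdist e b a <= gdist e a b.
  have [s [ss ps ls]] := gdistP a b.
  have [r l] := rev_walk ps; rewrite ls in r l.
  by rewrite -ss -(size_belast a s) -size_rev; apply: gdist_le.
by apply/eqP; rewrite eqn_leq !H.
Qed.

Lemma gdist_edge u w v : e u w -> gdist e u v <= (gdist e w v).+1.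
Proof.
move=> euw; have [s [ss ps ls]] := gdistP w v.
by rewrite -ss; apply: (@gdist_le u v (w :: s)) => //=; rewrite euw.
Qed.
Arguments gdist_edge {u w} v.

Lemma shortest_uniq x y s : size s = gdist e x y -> path e x s -> last x s = y -> uniq (x :: s).
Proof.
move=> ss ps ls; move: ls; case: (shortenP ps) => p' pp' up' sub' lp'.
apply: (leq_size_uniq up').
  by move=> z; rewrite !inE => /orP[->//|/sub' ->]; rewrite orbT.
rewrite /= ltnS leqNgt; apply/negP => lt.
by have := gdist_le pp' lp'; rewrite -ss leqNgt lt.
Qed.
Arguments shortest_uniq {x y s}.

Lemma in_walk_lt x y s z : path e x s -> last x s = y -> z \in s -> gdist e z y < size s.
Proof.
move=> ps ls zs; case/splitPr: zs ps ls => s1 s2 ps ls.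
rewrite cat_path last_cat /= in ps ls; case/and3P: ps => _ _ p2.
by rewrite size_cat /= addnS ltnS (leq_trans (gdist_le p2 ls)) // leq_addl.
Qed.
Arguments in_walk_lt {x y s z}.

Lemma nocyc x a b p q : uniq [:: x, a & p] -> uniq [:: x, b & q] ->
  path e x (a :: p) -> path e x (b :: q) -> last a p = last b q -> a != b -> False.
Proof.
move=> up uq pp pq l ab.
move: pp pq => /= /andP[xa pp] /andP[xb pq].
have [r1 l1] := rev_walk pq.
pose w := p ++ rev (belast b q).
have pw : path e a w by rewrite cat_path pp l r1.
have lw : last a w = b by rewrite last_cat l l1.
move: lw; case: (shortenP pw) => p' pp' up' sub' lp'.
have xw : x \notin w.
  rewrite mem_cat mem_rev negb_or; apply/andP; split.
    by move: up; rewrite /= !inE negb_or => /andP[/andP[]].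
  apply/negP => /mem_belast; move: uq => /= /andP[]; rewrite inE => /negP h _ /h.
  done.
apply: eacyc; exists [:: x, a & p']; split.
- case: p' {pp' up' sub'} lp' => [/= ab'|//]; by rewrite ab' eqxx in ab.
- rewrite cons_uniq up' andbT inE negb_or; apply/andP; split.
    by move: up; rewrite /= !inE negb_or => /andP[/andP[]].
  by apply/negP => /sub'; apply/negP.
- by rewrite /cycle rcons_path /= xa pp' lp' esy.
Qed.
Arguments nocyc {x a b p q}.

Lemma adj_neq u w v : e u w -> gdist e u v != gdist e w v.
Proof.
move=> euw; apply/eqP => h.
have [s [ss ps ls]] := gdistP u v.
have [t [st pt lt]] := gdistP w v.
have us := shortest_uniq ss ps ls.
have ut := shortest_uniq st pt lt.
case: s ss ps ls us => [|a s] ss ps ls us.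
  rewrite /= in ls; rewrite -ls gdist_xx in h.
  by move/esym/gdist0: h => wu; subst w; rewrite eirr in euw.
case: (eqVneq a w) => [aw | aw].
  subst a; move: ps => /= /andP[_ ps].
  by have := gdist_le ps ls; rewrite -h -ss /= ltnn.
apply: (@nocyc u a w s t) => //.
- rewrite cons_uniq ut andbT inE negb_or; apply/andP; split.
    by apply/eqP => uw; subst w; rewrite eirr in euw.
  by apply/negP => /(in_walk_lt pt lt); rewrite st -h ltnn.
- by rewrite /= euw.
- by rewrite lt -ls.
Qed.
Arguments adj_neq {u w} v.

Lemma closer_uniq u w1 w2 v : e u w1 -> e u w2 ->
  gdist e w1 v < gdist e u v -> gdist e w2 v < gdist e u v -> w1 = w2.
Proof.
move=> e1 e2 l1 l2; case: (eqVneq w1 w2) => // ne; exfalso.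
have h1 := gdist_edge v e1; have h2 := gdist_edge v e2.
have [s1 [ss1 ps1 ls1]] := gdistP w1 v.
have [s2 [ss2 ps2 ls2]] := gdistP w2 v.
have U w s : e u w -> gdist e w v < gdist e u v -> size s = gdist e w v ->
   path e w s -> last w s = v -> uniq [:: u, w & s].
  move=> ew lw ss ps ls; rewrite cons_uniq (shortest_uniq ss ps ls) andbT.
  rewrite inE negb_or; apply/andP; split.
    by apply/eqP => uw; subst w; rewrite eirr in ew.
  apply/negP => /(in_walk_lt ps ls); rewrite ss => h.
  by have := ltn_trans h lw; rewrite ltnn.
apply: (@nocyc u w1 w2 s1 s2) => //.
- exact: U.
- exact: U.
- by rewrite /= e1.
- by rewrite /= e2.
- by rewrite ls1 ls2.
Qed.
Arguments closer_uniq {u w1 w2 v}.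

Lemma closer_card u v :
  #|[pred w | e u w && (gdist e w v < gdist e u v)]| = (u != v).
Proof.
case: (eqVneq u v) => [-> | uv] /=.
  by apply: eq_card0 => w; rewrite inE gdist_xx ltn0 andbF.
have [s [ss ps ls]] := gdistP u v.
case: s ss ps ls => [|w s] ss ps ls.
  by rewrite /= in ls; rewrite ls eqxx in uv.
move: ps => /= /andP[ew ps].
have lw : gdist e w v < gdist e u v by rewrite -ss ltnS; exact: gdist_le ps ls.
apply: eq_card1 => z; rewrite inE; apply/idP/eqP => [/andP[ez lz] | ->].
  exact: (closer_uniq ez ew lz lw).
by rewrite ew lw.
Qed.


Local Open Scope ring_scope.

Lemma sum_split v (F : nat -> int) :
  \sum_u \sum_(w | e u w) F (gdist e u v) =
  \sum_(u | u != v) F (gdist e u v) + \sum_(w | w != v) F (gdist e w v).-1.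
Proof.
have step u : \sum_(w | e u w) F (gdist e u v) =
   (u != v)%:R * F (gdist e u v) +
   \sum_(w | e u w && (gdist e u v < gdist e w v)%N) F (gdist e w v).-1.
  rewrite (bigID (fun w => gdist e w v < gdist e u v)%N) /=; congr (_ + _).
    transitivity (\sum_(w in [pred w | e u w && (gdist e w v < gdist e u v)%N]) F (gdist e u v)).
      by apply: eq_bigl => w.
    by rewrite sumr_const closer_card mulr_natl.
  apply: eq_big => w.
    case euw: (e u w) => //=; have := adj_neq v euw.
    by rewrite -leqNgt ltn_neqAle eq_sym => ->.
  move=> /andP[euw lt0]; have le := gdist_edge v (esy' euw).
  have lt : (gdist e u v < gdist e w v)%N by rewrite ltn_neqAle (adj_neq v euw) leqNgt.
  by have -> : gdist e w v = (gdist e u v).+1 by apply/eqP; rewrite eqn_leq le lt.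
rewrite (eq_bigr _ (fun u _ => step u)) big_split /=; congr (_ + _).
  by rewrite [RHS]big_mkcond; apply: eq_bigr => u _; case: (u != v); rewrite ?mul1r ?mul0r.
rewrite (eq_bigr (fun u => \sum_w (if e u w && (gdist e u v < gdist e w v)%N then F (gdist e w v).-1 else 0))); last first.
  by move=> u _; rewrite big_mkcond.
rewrite exchange_big /= [RHS]big_mkcond; apply: eq_bigr => w _.
rewrite -big_mkcond /=.
transitivity (\sum_(u in [pred u | e w u && (gdist e u v < gdist e w v)%N]) F (gdist e w v).-1).
  by apply: eq_bigl => u; rewrite /= esy.
by rewrite sumr_const closer_card; case: (w != v).
Qed.


Lemma degE u (x : int) : (deg e u)%:Z * x = \sum_(w | e u w) x.
Proof.
rewrite /deg; transitivity (\sum_(w in [set y | e u y]) x); last first.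
  by apply: eq_bigl => w; rewrite inE.
by rewrite sumr_const -mulr_natl natz.
Qed.

Lemma cardpos (v : T) : (0 < #|T|)%N.
Proof. by apply/card_gt0P; exists v. Qed.

Lemma cnt (v : T) : \sum_(w | w != v) (1:int) = #|T|%:Z - 1.
Proof.
transitivity (\sum_(w in predC1 v) (1:int)); first by apply: eq_bigl.
by rewrite sumr_const cardC1 natz predn_int ?(cardpos v).
Qed.

Lemma sum_ne (v : T) (G : T -> int) : G v = 0 -> \sum_(u | u != v) G u = \sum_u G u.
Proof. by move=> h; rewrite [RHS](bigD1 v) //= h add0r. Qed.

Lemma keyK (v : T) : \sum_u (deg e u)%:Z * (gdist e u v)%:Z =
   2 * \sum_u (gdist e u v)%:Z - (#|T|%:Z - 1).
Proof.
rewrite (eq_bigr _ (fun u _ => degE u _)).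
rewrite (sum_split v (fun k => Posz k)).
rewrite (@sum_ne v (fun u => Posz (gdist e u v))) ?gdist_xx //.
rewrite [X in _ + X = _](eq_bigr (fun w => (gdist e w v)%:Z - 1)); last first.
  move=> w wv; rewrite predn_int // lt0n; apply/negP => /eqP /gdist0 h.
  by rewrite h eqxx in wv.
rewrite sumrB cnt (@sum_ne v (fun u => Posz (gdist e u v))) ?gdist_xx //.
by rewrite mulr2n mulrDl mul1r addrA.
Qed.

Lemma handshake (v : T) : \sum_u (deg e u)%:Z = 2 * (#|T|%:Z - 1).
Proof.
rewrite (eq_bigr (fun u => (deg e u)%:Z * 1)); last by move=> u _; rewrite mulr1.
rewrite (eq_bigr _ (fun u _ => degE u _)).
by rewrite (sum_split v (fun=> 1)) cnt mulr2n mulrDl mul1r.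
Qed.

Lemma total : (0 < #|T|)%N ->
  \sum_k (\sum_l (deg e l)%:Z * (gdist e l k)%:Z) * (deg e k)%:Z =
  4 * \sum_k \sum_l (gdist e l k)%:Z - 2 * (#|T|%:Z - 1) * (2 * #|T|%:Z - 1).
Proof.
move=> /card_gt0P [v0 _].
rewrite (eq_bigr _ (fun k _ => congr1 (fun z => z * (deg e k)%:Z) (keyK k))).
rewrite (eq_bigr (fun k => 2 * (\sum_l (gdist e l k)%:Z * (deg e k)%:Z) - (#|T|%:Z - 1) * (deg e k)%:Z)); last first.
  by move=> k _; rewrite mulrBl -mulrA mulr_suml.
rewrite sumrB -mulr_sumr -mulr_sumr handshake // exchange_big /=.
rewrite (eq_bigr (fun l => \sum_k (deg e k)%:Z * (gdist e k l)%:Z)); last first.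
  by move=> l _; apply: eq_bigr => k _; rewrite mulrC gdist_sym.
rewrite (eq_bigr _ (fun l _ => keyK l)) sumrB -mulr_sumr.
rewrite (_ : \sum_(i : T) (#|T|%:Z - 1) = #|T|%:Z * (#|T|%:Z - 1)); last first.
  by rewrite sumr_const -mulr_natl natz.
set W := \sum_i _; set N := (#|T|%:Z); ring.
Qed.

End Walks.

Local Open Scope ring_scope.
Theorem corollary2p3 (n : nat) (e : rel 'I_n) :
  (0 < n)%N -> is_tree e ->
  (deg_vec e)^T *m dist_mx e *m deg_vec e =
  (4 *: ((ones n)^T *m dist_mx e *m ones n))
    - ((2 * (n%:Z - 1) * (2 * n%:Z - 1))%:M).
Proof.
move=> n0 [[sy ir] co ac].
apply/matrixP => i j; rewrite !ord1 !mxE.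
under eq_bigr => k _ do rewrite !mxE.
under [X in _ = _ * X - _]eq_bigr => k _ do rewrite !mxE.
under eq_bigr => k _ do under eq_bigr => l _ do rewrite !mxE.
under [X in _ = _ * X - _]eq_bigr => k _ do under eq_bigr => l _ do rewrite !mxE.
rewrite total ?card_ord //.
rewrite eqxx mulr1n; congr (_ * _ - _); apply: eq_bigr => k _; rewrite mulr1.
by apply: eq_bigr => l _; rewrite mul1r.
Qed.
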